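(* Let $\mathcal{S}\subseteq 2^{[n]}$ be a Sperner family and $h:\mathcal{S}\to 2^{[n]}$ a function with $h(S)\subseteq S$ for every $S\in\mathcal{S}$, and suppose $\mathcal{F}=\mathcal{F}(\mathcal{S},h)$ is s-extremal, $\mathcal{F}\subsetneq 2^{[n]}$, and $\mathrm{Sh}(\mathcal{F})=\mathcal{H}(\mathcal{S})$. Then there exists $F\in 2^{[n]}\setminus\mathcal{F}$ such that $\mathcal{F}\cup\{F\}$ is s-extremal if and only if there exists $S_0\in\mathcal{S}$ such that $\mathcal{Q}_{S_0,h(S_0)}\not\subseteq\bigcup_{S\in\mathcal{S}\setminus\{S_0\}}\mathcal{Q}_{S,h(S)}$.
   Context: $[n]=\{1,\dots,n\}$. A Sperner family is a family of sets none of which is contained in another. $\mathcal{F}$ shatters $S$ if $\{F\cap S:F\in\mathcal{F}\}=2^S$; $\mathrm{Sh}(\mathcal{F})$ is the family of shattered sets; $\mathcal{F}$ is s-extremal if $|\mathrm{Sh}(\mathcal{F})|=|\mathcal{F}|$. For $H\subseteq S\subseteq[n]$, $\mathcal{Q}_{S,H}=\{H\cup B: B\subseteq[n]\setminus S\}$. $\mathcal{H}(\mathcal{S})=\{F\subseteq[n]: \text{no } S\in\mathcal{S} \text{ satisfies } S\subseteq F\}$, and $\mathcal{F}(\mathcal{S},h)=2^{[n]}\setminus\bigcup_{S\in\mathcal{S}}\mathcal{Q}_{S,h(S)}$. *)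

(* Defs.v *)
From mathcomp Require Import all_boot.
Set Implicit Arguments. Unset Strict Implicit. Unset Printing Implicit Defensive.

Definition sperner n (S : {set {set 'I_n}}) : Prop :=
  forall A B, A \in S -> B \in S -> A \subset B -> A = B.

Definition shatters n (F : {set {set 'I_n}}) (X : {set 'I_n}) : bool :=
  [set F0 :&: X | F0 in F] == powerset X.

Definition Sh n (F : {set {set 'I_n}}) : {set {set 'I_n}} :=
  [set X | shatters F X].

Definition s_extremal n (F : {set {set 'I_n}}) : Prop := #|Sh F| = #|F|.

Definition Q n (S H : {set 'I_n}) : {set {set 'I_n}} :=
  [set H :|: B | B in powerset (~: S)].

Definition HS n (S : {set {set 'I_n}}) : {set {set 'I_n}} :=
  [set F : {set 'I_n} | [forall X in S, ~~ (X \subset F)]].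

Definition FSh n (S : {set {set 'I_n}}) (h : {set 'I_n} -> {set 'I_n})
  : {set {set 'I_n}} :=
  ~: \bigcup_(X in S) Q X (h X).

(* Main.v *)
Require Import Defs.
From mathcomp Require Import all_boot zify.
Set Implicit Arguments. Unset Strict Implicit. Unset Printing Implicit Defensive.

Section Pajor.
Variable n : nat.
Implicit Types (G : {set {set 'I_n}}) (A B C Y Z D : {set 'I_n}).

Lemma shattersP G Y :
  reflect (forall Z, Z \subset Y -> exists2 A, A \in G & A :&: Y = Z) (shatters G Y).
Proof.
apply: (iffP eqP) => [E Z sZY|H].
  have : Z \in powerset Y by rewrite powersetE.
  by rewrite -E => /imsetP[A AG ->]; exists A.
apply/setP => Z; rewrite powersetE; apply/imsetP/idP => [[A _ ->]|/H[A AG <-]].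
  exact: subsetIr.
by exists A.
Qed.

Lemma ShP G Y : (Y \in Sh G) = shatters G Y.
Proof. by rewrite inE. Qed.

Definition sst G Y := exists B, [disjoint B & Y] /\ forall Z, Z \subset Y -> B :|: Z \in G.

Lemma Sh_sub G G' : G \subset G' -> Sh G \subset Sh G'.
Proof.
move=> sGG'; apply/subsetP => Y; rewrite !ShP => /shattersP H.
apply/shattersP => Z /H [A AG <-]; exists A => //; exact: (subsetP sGG').
Qed.

Lemma Sh_down G Y Z : Y \in Sh G -> Z \subset Y -> Z \in Sh G.
Proof.
rewrite !ShP => /shattersP H sZY; apply/shattersP => W sWZ.
have [A AG EA] := H W (subset_trans sWZ sZY); exists A => //.
apply/setP => y; move/setP: EA => /(_ y); rewrite !inE.
case yW: (y \in W); first by move/(subsetP sWZ): yW => -> /andP[->].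
by case: (y \in A) => //=; case yZ: (y \in Z) => //; rewrite (subsetP sZY).
Qed.

Lemma set0_Sh G A : A \in G -> set0 \in Sh G.
Proof.
move=> AG; rewrite ShP; apply/shattersP => Z; rewrite subset0 => /eqP ->.
by exists A; rewrite ?setI0.
Qed.

Lemma sst0 G : set0 \in Sh G -> sst G set0.
Proof.
rewrite ShP => /shattersP /(_ set0 (sub0set _)) [A AG _].
exists A; split; first by rewrite -setI_eq0 setI0.
by move=> Z; rewrite subset0 => /eqP ->; rewrite setU0.
Qed.

Lemma Sh_subD G D Y : G \subset powerset D -> Y \in Sh G -> Y \subset D.
Proof.
move=> sGD; rewrite ShP => /shattersP H; apply/subsetP => y yY.
have [A AG EA] := H [set y] (etrans (sub1set _ _) yY).
have : y \in A :&: Y by rewrite EA set11.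
rewrite inE => /andP[yA _].
by move/(subsetP sGD): AG; rewrite powersetE => /subsetP; apply.
Qed.

Lemma setU1I x A Y : x \notin Y -> (x |: A) :&: Y = A :&: Y.
Proof.
move=> xY; apply/setP => y; rewrite !inE.
by case: (eqVneq y x) => [->|]; rewrite ?(negbTE xY) ?andbF.
Qed.

Definition P G := #|G| <= #|Sh G| /\
  (#|Sh G| = #|G| -> forall Y, Y \in Sh G -> sst G Y).

Lemma step G D x : x \in D -> G \subset powerset D ->
  (forall G', G' \subset powerset (D :\ x) -> P G') ->
  #|G| <= #|Sh G| /\ (#|Sh G| = #|G| -> forall Y, Y \in Sh G -> x \in Y -> sst G Y).
Proof.
move=> xD sGD IH.
pose G0 := [set A in G | x \notin A].
pose G1 := [set C : {set 'I_n} | (x \notin C) && (x |: C \in G)].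
have G0P A : (A \in G0) = (A \in G) && (x \notin A) by rewrite inE.
have G1P C : (C \in G1) = (x \notin C) && (x |: C \in G) by rewrite inE.
have nx01 A : A \in G0 :|: G1 -> x \notin A.
  by rewrite inE G0P G1P => /orP[/andP[]|/andP[]].
have nxI A : A \in G0 :&: G1 -> x \notin A.
  by rewrite inE G0P => /andP[/andP[]].
have cardG : #|G| = #|G0 :|: G1| + #|G0 :&: G1|.
  rewrite cardsUI -(cardsID [set A : {set 'I_n} | x \in A] G).
  have -> : G :\: [set A : {set 'I_n} | x \in A] = G0.
    by apply/setP => A; rewrite !inE andbC.
  have -> : G :&: [set A : {set 'I_n} | x \in A] = (fun C => x |: C) @: G1.
    apply/setP => A; rewrite !inE; apply/andP/imsetP.
      move=> [AG xA]; exists (A :\ x); first by rewrite G1P !inE eqxx /= setD1K.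
      by rewrite setD1K.
    move=> [C]; rewrite G1P => /andP[_ CG] ->; split=> //; exact: setU11.
  rewrite card_in_imset; first by rewrite addnC.
  move=> C1 C2; rewrite !G1P => /andP[n1 _] /andP[n2 _] E.
  by rewrite -(setU1K n1) E setU1K.
have nxSU Y : Y \in Sh (G0 :|: G1) -> x \notin Y.
  rewrite ShP => /shattersP /(_ Y (subxx _)) [A AG EA]; apply/negP => xY.
  have : x \in A :&: Y by rewrite EA.
  by rewrite inE (negbTE (nx01 _ AG)).
have nxSI Y : Y \in Sh (G0 :&: G1) -> x \notin Y.
  rewrite ShP => /shattersP /(_ Y (subxx _)) [A AG EA]; apply/negP => xY.
  have : x \in A :&: Y by rewrite EA.
  by rewrite inE (negbTE (nxI _ AG)).
have sSU : Sh (G0 :|: G1) \subset Sh G.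
  apply/subsetP => Y YS; have xY := nxSU _ YS; move: YS.
  rewrite !ShP => /shattersP H; apply/shattersP => Z /H [A].
  rewrite inE G0P G1P => /orP[/andP[AG _]|/andP[_ AG]] <-; first by exists A.
  by exists (x |: A) => //; rewrite setU1I.
have sSI : (fun C => x |: C) @: Sh (G0 :&: G1) \subset Sh G.
  apply/subsetP => Y' /imsetP[Y YS ->]; have xY := nxSI _ YS; move: YS.
  rewrite !ShP => /shattersP H; apply/shattersP => Z sZ.
  have sZ' : Z :\ x \subset Y.
    apply/subsetP => y; rewrite !inE => /andP[yx /(subsetP sZ)].
    by rewrite !inE (negbTE yx).
  have [A] := H _ sZ'; rewrite inE G0P G1P => /andP[/andP[AG xA] /andP[_ xAG]] EA.
  case xZ: (x \in Z).
    exists (x |: A) => //; rewrite -setUIr EA setD1K //.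
  exists A => //; rewrite setIUr EA.
  have -> : A :&: [set x] = set0.
    by apply/setP => y; rewrite !inE; case: (eqVneq y x) => [->|]; rewrite ?(negbTE xA) ?andbF.
  by rewrite set0U; apply/setP => y; rewrite !inE; case: (eqVneq y x) => [->|]; rewrite ?xZ.
pose U := Sh (G0 :|: G1) :|: (fun C => x |: C) @: Sh (G0 :&: G1).
have cardU : #|U| = #|Sh (G0 :|: G1)| + #|Sh (G0 :&: G1)|.
  have -> : #|Sh (G0 :&: G1)| = #|(fun C => x |: C) @: Sh (G0 :&: G1)|.
    rewrite card_in_imset // => Y1 Y2 /nxSI n1 /nxSI n2 E.
    by rewrite -(setU1K n1) E setU1K.
  rewrite -cardsUI.
  have -> : Sh (G0 :|: G1) :&: (fun C => x |: C) @: Sh (G0 :&: G1) = set0.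
    apply/setP => Y; rewrite inE [RHS]inE; apply/negP => /andP[/nxSU xY /imsetP[Y' _ E]].
    by rewrite E setU11 in xY.
  by rewrite cards0 addn0.
have sU : U \subset Sh G by rewrite subUset sSU sSI.
have sub0 : G0 :|: G1 \subset powerset (D :\ x).
  apply/subsetP => A AU; rewrite powersetE; apply/subsetP => y yA.
  rewrite !inE; apply/andP; split.
    by apply/negP => /eqP E; move: (nx01 _ AU); rewrite -E yA.
  move: AU; rewrite inE G0P G1P => /orP[/andP[AG _]|/andP[_ AG]];
    move/(subsetP sGD): AG; rewrite powersetE => /subsetP; apply => //.
  by rewrite inE yA orbT.
have sub1 : G0 :&: G1 \subset powerset (D :\ x).
  by apply: subset_trans sub0; apply/subsetP => A; rewrite in_setI in_setU => /andP[-> _].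
have UD : U = Sh (G0 :|: G1) :|: (fun C => x |: C) @: Sh (G0 :&: G1) by [].
clearbody U G0 G1.
have cU := subset_leq_card sU.
have [h0 _] := IH _ sub0; have [h1 H1] := IH _ sub1.
split; first by lia.
move=> eqS Y YS xY.
have UE : U = Sh G.
  by apply/eqP; rewrite eqEcard sU /= eqS cardG cardU leq_add.
have eq1 : #|Sh (G0 :&: G1)| = #|G0 :&: G1|.
  move: cU h0 h1; rewrite cardU eqS cardG.
  move: #|Sh (G0 :&: G1)| #|G0 :&: G1| #|Sh (G0 :|: G1)| #|G0 :|: G1| => a b c d.
  lia.
have : Y \in U by rewrite UE.
rewrite UD.
rewrite in_setU => /orP[/nxSU|/imsetP[Y' Y'S EY]]; first by rewrite xY.
have [B [dB HB]] := H1 eq1 Y' Y'S.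
have xB : x \notin B by have := HB set0 (sub0set _); rewrite setU0 => /nxI.
exists B; split.
  rewrite EY -setI_eq0 setIUr (disjoint_setI0 dB) setU0.
  apply/eqP/setP => y; rewrite !inE.
  by case: (eqVneq y x) => [->|]; rewrite ?(negbTE xB) ?andbF.
move=> Z sZ.
have sZ' : Z :\ x \subset Y'.
  apply/subsetP => y; rewrite !inE => /andP[yx /(subsetP sZ)].
  by rewrite EY !inE (negbTE yx).
have := HB _ sZ'; rewrite in_setI G0P G1P => /andP[/andP[BG _] /andP[_ BG']].
case xZ: (x \in Z).
  by rewrite -(setD1K xZ) setUCA.
have EZ : Z :\ x = Z.
  by apply/setP => y; rewrite !inE; case: (eqVneq y x) => [->|]; rewrite ?xZ.
by rewrite -EZ.
Qed.

Lemma base G : G \subset powerset set0 -> P G.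
Proof.
move=> sG; split.
  case: (set_0Vmem G) => [->|[A AG]]; first by rewrite cards0.
  have s1 : G \subset [set set0].
    apply/subsetP=> B /(subsetP sG); rewrite powersetE subset0 => /eqP ->.
    by rewrite set11.
  have := subset_leq_card s1; rewrite cards1.
  have : 0 < #|Sh G| by apply/card_gt0P; exists set0; exact: set0_Sh AG.
  lia.
move=> _ Y YS.
have : Y \subset set0 by exact: Sh_subD sG YS.
by rewrite subset0 => /eqP E; move: YS; rewrite E; exact: sst0.
Qed.

Lemma pajor_all k : forall D G, #|D| <= k -> G \subset powerset D -> P G.
Proof.
elim: k => [|k IHk] D G hD sGD.
  have D0 : D = set0 by apply/eqP; rewrite -cards_eq0; lia.
  by rewrite D0 in sGD; exact: base.
have IH' : forall x, x \in D -> forall G', G' \subset powerset (D :\ x) -> P G'.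
  move=> x xD G' sG'; apply: (IHk (D :\ x)) => //.
  by rewrite (cardsD1 x D) xD in hD; lia.
split.
  case: (set_0Vmem D) => [D0|[x xD]]; first by rewrite D0 in sGD; exact: (base sGD).1.
  exact: (step xD sGD (IH' x xD)).1.
move=> eqS Y YS.
case: (set_0Vmem Y) => [Y0|[x xY]]; first by rewrite Y0 in YS *; exact: sst0.
have xD : x \in D := subsetP (Sh_subD sGD YS) _ xY.
exact: (step xD sGD (IH' x xD)).2 eqS Y YS xY.
Qed.

Lemma pajorT G : P G.
Proof.
apply: (@pajor_all #|[set: 'I_n]| setT G (leqnn _)).
by apply/subsetP => A _; rewrite powersetE subsetT.
Qed.

Lemma pajor G : #|G| <= #|Sh G|.
Proof. by case: (pajorT G). Qed.

Lemma ext_sst G : #|Sh G| = #|G| -> forall Y, Y \in Sh G -> sst G Y.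
Proof. by case: (pajorT G). Qed.

End Pajor.

Section Main.
Variable n : nat.
Implicit Types (G : {set {set 'I_n}}) (A B C Y Z X H : {set 'I_n}).

Lemma QP X H A : H \subset X -> (A \in Q X H) = (A :&: X == H).
Proof.
move=> sHX; apply/imsetP/eqP => [[B]|E].
  rewrite powersetE => sB ->; apply/setP => y; rewrite !inE.
  move/implyP: (subsetP sHX y); move/implyP: (subsetP sB y); rewrite !inE.
  by case: (y \in H); case: (y \in B); case: (y \in X).
exists (A :\: X); last by rewrite -E setID.
by rewrite powersetE; apply/subsetP => y; rewrite !inE => /andP[].
Qed.

Variables (S : {set {set 'I_n}}) (h : {set 'I_n} -> {set 'I_n}).
Hypothesis hsub : forall X, X \in S -> h X \subset X.

Lemma notFS A : A \notin FSh S h -> exists2 X, X \in S & A :&: X = h X.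
Proof.
rewrite in_setC negbK => /bigcupP [X XS]; rewrite QP ?hsub // => /eqP E.
by exists X.
Qed.

Lemma inQ_notFS A X : X \in S -> A :&: X = h X -> A \notin FSh S h.
Proof.
move=> XS E; rewrite in_setC negbK; apply/bigcupP; exists X => //.
by rewrite QP ?hsub // E.
Qed.

Lemma HSn Y : Y \notin HS S -> exists2 X, X \in S & X \subset Y.
Proof.
rewrite inE => /forallPn [X]; rewrite negb_imply negbK => /andP[XS sXY].
by exists X.
Qed.

Lemma S_notHS X : X \in S -> X \notin HS S.
Proof. by move=> XS; rewrite inE; apply/forallPn; exists X; rewrite XS subxx. Qed.

Lemma isF F A X : A \in F |: FSh S h -> X \in S -> A :&: X = h X -> A = F.
Proof.
rewrite in_setU1 => /orP[/eqP -> //|AF] XS E.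
by move: (inQ_notFS XS E); rewrite AF.
Qed.

Lemma KL F Y : Y \in Sh (F |: FSh S h) -> Y \notin HS S ->
  Y \in S /\ F :&: Y = h Y.
Proof.
move=> YG /HSn [X XS sXY].
have XG := Sh_down YG sXY.
have hXX := hsub XS.
have FX : F :&: X = h X.
  move: XG; rewrite ShP => /shattersP /(_ _ hXX) [A AG E].
  by rewrite -(isF AG XS E).
suff EYX : Y = X by rewrite EYX.
apply/eqP; rewrite eqEsubset sXY andbT; apply/negP => /negP /subsetPn [y yY yX].
have sZY : y |: X \subset Y by rewrite subUset sub1set yY.
have ZG := Sh_down YG sZY.
have sXZ : X \subset y |: X by apply: subsetUr.
have trX A : A :&: (y |: X) :&: X = A :&: X by rewrite -setIA (setIidPr sXZ).
move: ZG; rewrite ShP => /shattersP ZG.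
have [A1 A1G E1] := ZG (h X) (subset_trans hXX sXZ).
have [A2 A2G E2] : exists2 A2, A2 \in F |: FSh S h & A2 :&: (y |: X) = y |: h X.
  by apply: ZG; rewrite setUS.
have F1 : A1 = F by apply: (isF A1G XS); rewrite -trX E1 (setIidPl hXX).
have F2 : A2 = F by apply: (isF A2G XS); rewrite -trX E2 setU1I // (setIidPl hXX).
have : y \in A2 :&: (y |: X) by rewrite E2 setU11.
rewrite F2 -F1 E1 => /(subsetP hXX); by rewrite (negbTE yX).
Qed.

End Main.

Theorem lemma17 (n : nat) (S : {set {set 'I_n}}) (h : {set 'I_n} -> {set 'I_n}) :
  sperner S ->
  (forall X, X \in S -> h X \subset X) ->
  s_extremal (FSh S h) ->
  FSh S h != setT ->
  Sh (FSh S h) = HS S ->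
  (exists F : {set 'I_n}, F \notin FSh S h /\ s_extremal (F |: FSh S h)) <->
  (exists2 S0, S0 \in S &
     ~~ (Q S0 (h S0) \subset \bigcup_(X in S :\ S0) Q X (h X))).
Proof.
move=> spS hS extF _ ShF; split.
  move=> [F [FnF extG]].
  have cardG : #|F |: FSh S h| = #|FSh S h|.+1 by rewrite cardsU1 FnF.
  have [Y YG YnH] : exists2 Y, Y \in Sh (F |: FSh S h) & Y \notin HS S.
    case: (boolP (Sh (F |: FSh S h) \subset HS S)) => [sub|/subsetPn [Y YG YnH]].
      have := subset_leq_card sub; rewrite -ShF.
      move: extG extF; rewrite /s_extremal cardG => -> ->; lia.
    by exists Y.
  have [S0S FS0] := KL hS YG YnH.
  exists Y => //; apply/negP => /subsetP /(_ F).
  rewrite QP ?hS // FS0 eqxx => /(_ isT) /bigcupP [X].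
  rewrite in_setD1 => /andP[XnY XS]; rewrite QP ?hS // => /eqP FX.
  have [B [dB HB]] := ext_sst extG YG.
  have hYY := hS _ S0S.
  have FB : F = B :|: h Y.
    have := HB _ hYY => BG; apply/esym; apply: (isF hS BG S0S).
    by rewrite setIUl (disjoint_setI0 dB) set0U (setIidPl hYY).
  have [z zY zX] : exists2 z, z \in Y & z \notin X.
    apply/subsetPn/negP => sYX; move: (spS _ _ S0S XS sYX) => E.
    by rewrite E eqxx in XnY.
  suff claim : forall T : {set 'I_n}, T \subset Y -> T :&: X = h Y :&: X -> T != h Y -> False.
    case zh: (z \in h Y).
      apply: (claim (h Y :\ z)).
      - exact: subset_trans (subsetDl _ _) hYY.
      - apply/setP => y; rewrite !inE; case: (eqVneq y z) => [->|] //=.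
        by rewrite (negbTE zX) !andbF.
      - by apply/negP => /eqP E; move: zh; rewrite -{1}E !inE eqxx.
    apply: (claim (z |: h Y)).
    - by rewrite subUset sub1set zY hYY.
    - by rewrite setU1I.
    - by apply/negP => /eqP E; move: zh; rewrite -E setU11.
  move=> T sTY ETX nT.
  have AG := HB _ sTY.
  have AY : (B :|: T) :&: Y = T.
    by rewrite setIUl (disjoint_setI0 dB) set0U (setIidPl sTY).
  move: AG; rewrite in_setU1 => /orP[/eqP AF|AFS].
    by move: nT; rewrite -AY AF FS0 eqxx.
  have AX : (B :|: T) :&: X = h X by rewrite setIUl ETX -setIUl -FB.
  by move: (inQ_notFS hS XS AX); rewrite AFS.
move=> [S0 S0S /subsetPn [F FQ FnU]].
have hSS := hS _ S0S.
move: (FQ); rewrite QP // => /eqP FS0.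
have FnF : F \notin FSh S h by apply: (inQ_notFS hS S0S).
exists F; split => //.
have cardG : #|F |: FSh S h| = #|FSh S h|.+1 by rewrite cardsU1 FnF.
have sG : Sh (F |: FSh S h) \subset S0 |: HS S.
  apply/subsetP => Y YG; rewrite in_setU1; case: (boolP (Y \in HS S)) => [_|YnH].
    by rewrite orbT.
  have [YS FY] := KL hS YG YnH.
  case: (eqVneq Y S0) => [_ //|YnS0].
  exfalso; move: FnU; apply/negP; rewrite negbK; apply/bigcupP; exists Y.
    by rewrite in_setD1 YnS0 YS.
  by rewrite QP ?hS // FY.
have S0G : S0 \in Sh (F |: FSh S h).
  apply/negP => nS0.
  have sub : Sh (F |: FSh S h) \subset HS S.
    apply/subsetP => Y YG; move: (subsetP sG Y YG); rewrite in_setU1 => /orP[/eqP E|//].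
    by move: nS0; rewrite -E YG.
  have := subset_leq_card sub; have := pajor (F |: FSh S h).
  rewrite -ShF cardG extF; lia.
rewrite /s_extremal; have -> : Sh (F |: FSh S h) = S0 |: HS S.
  apply/eqP; rewrite eqEsubset sG subUset sub1set S0G -ShF Sh_sub //.
  exact: subsetUr.
by rewrite /s_extremal cardsU1 (S_notHS S0S) cardG -ShF extF.
Qed.
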